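(* Let $\mathcal H$ be a Hilbert space, $A$ a bounded, everywhere defined, symmetric operator on $\mathcal H$, and $P$ a self-adjoint operator on $\mathcal H$. Suppose that $D(PA)=D(P)$ (where $D(PA)=\{x\in\mathcal H: Ax\in D(P)\}$) and that there is a bounded operator $B$ on $\mathcal H$ with $BD(P)\subset D(P)$ such that $PAf-APf=Bf$ for every $f\in D(P)$. Then $AP$ is closed and $APA$ is self-adjoint.
   Context: Products of operators carry their natural domains; $D(AP)=D(P)$ and $D(APA)=D(PA)$. *)

(* Defs.v *)
(* complex Hilbert spaces over C := R[i] with R : realType,
   and (possibly unbounded) operators given by a domain predicate and a map. *)
From HB Require Import structures.
From mathcomp Require Import all_boot all_order all_algebra.
From mathcomp Require Import complex.
From mathcomp Require Import reals.
Set Implicit Arguments. Unset Strict Implicit. Unset Printing Implicit Defensive.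
Import Order.TTheory GRing.Theory Num.Theory.
Local Open Scope ring_scope.

Section Hilbert.
Variables (R : realType) (H : lmodType R[i]).

Definition inner_product_axioms (inner : H -> H -> R[i]) : Prop :=
  [/\ (forall x y z, inner (x + y) z = inner x z + inner y z),
      (forall (a : R[i]) x y, inner (a *: x) y = a * inner x y),
      (forall x y, inner y x = conjc (inner x y)),
      (forall x, 0 <= complex.Re (inner x x) /\ complex.Im (inner x x) = 0)
    & (forall x, inner x x = 0 -> x = 0)].

Definition hnorm (inner : H -> H -> R[i]) (x : H) : R :=
  Num.sqrt (complex.Re (inner x x)).

Definition hconverges (inner : H -> H -> R[i]) (u : nat -> H) (l : H) : Prop :=
  forall eps : R, 0 < eps ->
    exists N : nat, forall n : nat, (N <= n)%N -> hnorm inner (u n - l) < eps.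

Definition hcauchy (inner : H -> H -> R[i]) (u : nat -> H) : Prop :=
  forall eps : R, 0 < eps ->
    exists N : nat, forall m n : nat, (N <= m)%N -> (N <= n)%N ->
      hnorm inner (u m - u n) < eps.

Definition is_hilbert_space (inner : H -> H -> R[i]) : Prop :=
  inner_product_axioms inner /\
  forall u : nat -> H, hcauchy inner u -> exists l : H, hconverges inner u l.

Definition dense (inner : H -> H -> R[i]) (D : H -> Prop) : Prop :=
  forall x (eps : R), 0 < eps -> exists y, D y /\ hnorm inner (x - y) < eps.

Definition bounded_op (inner : H -> H -> R[i]) (A : H -> H) : Prop :=
  linear_for *:%R A /\
  exists M : R, forall x, hnorm inner (A x) <= M * hnorm inner x.

Definition symmetric_op (inner : H -> H -> R[i]) (A : H -> H) : Prop :=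
  forall x y, inner (A x) y = inner x (A y).

Definition adjoint_graph (inner : H -> H -> R[i]) (D : H -> Prop) (T : H -> H)
    (y z : H) : Prop :=
  forall x, D x -> inner (T x) y = inner x z.

Definition self_adjoint (inner : H -> H -> R[i]) (D : H -> Prop) (T : H -> H) : Prop :=
  dense inner D /\
  forall y z, adjoint_graph inner D T y z <-> (D y /\ z = T y).

Definition closed_op (inner : H -> H -> R[i]) (D : H -> Prop) (T : H -> H) : Prop :=
  forall (u : nat -> H) (x y : H),
    (forall n, D (u n)) -> hconverges inner u x -> hconverges inner (fun n => T (u n)) y ->
    D x /\ T x = y.

End Hilbert.

(* Natural domains of products of operators: D(AP) = D(P), D(PA) = {x | A x \in D(P)},
   D(APA) = D(PA). *)
Definition dom_comp_left {H : Type} (DP : H -> Prop) : H -> Prop := DP.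
Definition dom_comp_right {H : Type} (DP : H -> Prop) (A : H -> H) : H -> Prop :=
  fun x => DP (A x).

(* Main.v *)
Require Import Defs.
From HB Require Import structures.
From mathcomp Require Import all_boot all_order all_algebra.
From mathcomp Require Import complex.
From mathcomp Require Import reals.
From mathcomp Require Import ring lra zify.
Import Order.TTheory GRing.Theory Num.Theory.
Local Open Scope ring_scope. Local Open Scope complex_scope.
Set Implicit Arguments. Unset Strict Implicit.

Section S.
Variables (R : realType) (H : lmodType R[i]) (inner : H -> H -> R[i]).
Hypothesis IP : inner_product_axioms inner.

Lemma Re_add (a b : R[i]) : complex.Re (a + b) = complex.Re a + complex.Re b.
Proof. by case: a; case: b. Qed.
Lemma Im_add (a b : R[i]) : complex.Im (a + b) = complex.Im a + complex.Im b.
Proof. by case: a; case: b. Qed.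
Lemma Re_opp (a : R[i]) : complex.Re (- a) = - complex.Re a.
Proof. by case: a. Qed.
Lemma Im_opp (a : R[i]) : complex.Im (- a) = - complex.Im a.
Proof. by case: a. Qed.
Lemma Re_conj (a : R[i]) : complex.Re (conjc a) = complex.Re a.
Proof. by case: a. Qed.
Lemma Re_realM (s : R) (a : R[i]) : complex.Re (s%:C * a) = s * complex.Re a.
Proof. case: a => x y /=. lra. Qed.
Lemma Re_iM (a : R[i]) : complex.Re ('i * a) = - complex.Im a.
Proof. case: a => x y /=. lra. Qed.

Lemma conjD (a b : R[i]) : conjc (a + b) = conjc a + conjc b.
Proof. case: a => ? ?; case: b => ? ? /=; congr Complex; lra. Qed.
Lemma conjN (a : R[i]) : conjc (- a) = - conjc a.
Proof. by case: a. Qed.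

Lemma inner0l y : inner 0 y = 0.
Proof. case: IP => _ hZ _ _ _. by rewrite -(scale0r (0:H)) hZ mul0r. Qed.
Lemma innerNl x y : inner (- x) y = - inner x y.
Proof. case: IP => _ hZ _ _ _. by rewrite -scaleN1r hZ mulN1r. Qed.
Lemma innerBl x y z : inner (x - y) z = inner x z - inner y z.
Proof. case: IP => hD _ _ _ _. by rewrite hD innerNl. Qed.
Lemma innerDr x y z : inner x (y + z) = inner x y + inner x z.
Proof. case: IP => hD _ hC _ _. by rewrite hC hD conjD (hC y x) (hC z x). Qed.
Lemma innerNr x y : inner x (- y) = - inner x y.
Proof. case: IP => hD _ hC _ _. by rewrite hC innerNl conjN (hC y x). Qed.
Lemma innerBr x y z : inner x (y - z) = inner x y - inner x z.
Proof. by rewrite innerDr innerNr. Qed.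
End S.
Section S2.
Variables (R : realType) (H : lmodType R[i]) (inner : H -> H -> R[i]).
Hypothesis IP : inner_product_axioms inner.
Local Notation q v := (complex.Re (inner v v)).

Lemma key w v (s : R) : 2 * s * complex.Re (inner w v) <= s ^+ 2 * q w + q v.
Proof.
have := IP; case=> hD hZ hC hP _.
have [h _] := hP (s%:C *: w - v).
rewrite (innerBl IP) !(innerBr IP) !hZ (hC (s%:C *: w) w) (hC (s%:C*:w) v) !hZ in h.
rewrite !(Re_add, Re_opp, Re_realM, Re_conj) in h.
rewrite expr2; lra.
Qed.

Lemma min_lt (x a b : R) : x < Order.min a b -> x < a /\ x < b.
Proof. by rewrite lt_min => /andP. Qed.
Lemma min_pos (a b : R) : 0 < a -> 0 < b -> 0 < Order.min a b.
Proof. by move=> ha hb; rewrite lt_min ha hb. Qed.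

Lemma q_ge0 v : 0 <= q v.
Proof. by case: IP => _ _ _ hP _; case: (hP v). Qed.

Lemma re_small w (eps : R) : 0 < eps ->
  exists2 d, 0 < d & forall v, hnorm inner v < d -> complex.Re (inner w v) < eps.
Proof.
move=> he.
set K := q w + 1.
have hK : 0 < K by rewrite /K; have := q_ge0 w; lra.
set s := eps / K.
have hs : 0 < s by exact: divr_gt0.
have hsK : s * K = eps by rewrite /s mulrC mulrCA mulfV ?mulr1 // gt_eqF.
exists (Num.sqrt (s * eps)); first by rewrite sqrtr_gt0; exact: mulr_gt0.
move=> v; rewrite /hnorm ltr_sqrt; last exact: mulr_gt0. move=> hv.
have hk := key w v s.
have h1 : s ^+ 2 * q w <= s ^+ 2 * K.
  by rewrite ler_wpM2l ?sqr_ge0 // /K lerDl.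
have h2 : s ^+ 2 * K = s * eps by rewrite expr2 -mulrA hsK.
have h3 : s * (2 * complex.Re (inner w v)) < s * (2 * eps) by nra.
rewrite ltr_pM2l // in h3; lra.
Qed.

Definition smallc (c : R[i]) (e : R) :=
  `|complex.Re c| < e /\ `|complex.Im c| < e.

Lemma inner_small w (eps : R) : 0 < eps ->
  exists2 d, 0 < d & forall v, hnorm inner v < d -> smallc (inner w v) eps.
Proof.
move=> he.
have := IP; case=> _ hZ _ _ _.
have [d1 h1 H1] := re_small w he.
have [d2 h2 H2] := re_small (- w) he.
have [d3 h3 H3] := re_small ('i *: w) he.
have [d4 h4 H4] := re_small (- ('i *: w)) he.
exists (Order.min (Order.min d1 d2) (Order.min d3 d4)).
  by rewrite !min_pos.
move=> v /min_lt [/min_lt [/H1 a1 /H2 a2] /min_lt [/H3 a3 /H4 a4]].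
rewrite (innerNl IP) Re_opp in a2.
rewrite hZ Re_iM in a3.
rewrite (innerNl IP) hZ Re_opp Re_iM opprK in a4.
split; rewrite ltr_norml; apply/andP; split; lra.
Qed.

Lemma smallc_add a b e1 e2 : smallc a e1 -> smallc b e2 -> smallc (a + b) (e1 + e2).
Proof.
move=> [a1 a2] [b1 b2]; rewrite /smallc Re_add Im_add; split.
  exact: le_lt_trans (ler_normD _ _) (ltrD a1 b1).
exact: le_lt_trans (ler_normD _ _) (ltrD a2 b2).
Qed.
Lemma smallc_opp a e : smallc a e -> smallc (- a) e.
Proof. by rewrite /smallc Re_opp Im_opp !normrN. Qed.

Lemma smallc_zero c : (forall e, 0 < e -> smallc c e) -> c = 0.
Proof.
move=> h; case: c h => a b h.
have ha : a = 0.
  apply/eqP; apply/negPn/negP => ha.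
  have [+ _] := h `|a| (ltac:(by rewrite normr_gt0) : 0 < `|a|); by rewrite ltxx.
have hb : b = 0.
  apply/eqP; apply/negPn/negP => hb.
  have [_ +] := h `|b| (ltac:(by rewrite normr_gt0) : 0 < `|b|); by rewrite ltxx.
by rewrite ha hb.
Qed.

Lemma hnorm_ge0 v : 0 <= hnorm inner v.
Proof. exact: sqrtr_ge0. Qed.

Lemma bnd (A : H -> H) : bounded_op inner A -> forall d, 0 < d ->
  exists2 d', 0 < d' & forall v, hnorm inner v < d' -> hnorm inner (A v) < d.
Proof.
move=> [_ [M hM]] d hd.
have hM1 : 0 < `|M| + 1 by have := normr_ge0 M; lra.
exists (d / (`|M| + 1)); first exact: divr_gt0.
move=> v hv.
have e1 := hM v.
have e2 : M * hnorm inner v <= `|M| * hnorm inner v.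
  by rewrite ler_wpM2r ?hnorm_ge0 ?ler_norm.
have e3 : (`|M| + 1) * (d / (`|M| + 1)) = d.
  by rewrite mulrC -mulrA mulVf ?mulr1 // gt_eqF.
have := hnorm_ge0 v; have := normr_ge0 M; nra.
Qed.

Lemma lin_sub (A : H -> H) : linear_for *:%R A -> forall u v, A (u - v) = A u - A v.
Proof.
move=> hL u v.
have h0 : A 0 = 0.
  have h := hL 1 0 0; simpl in h.
  rewrite (_ : 1 *: A 0 = A 0) in h; last exact: scale1r.
  rewrite (_ : 1 *: (0:H) = 0) in h; last exact: scale1r.
  rewrite addr0 in h.
  by apply: (addrI (A 0)); rewrite addr0 -h.
have hN : A (- v) = - A v.
  by have := hL (-1) v 0; rewrite /= !addr0 h0 addr0 !scaleN1r.
by have := hL 1 u (- v); rewrite /= !scale1r hN.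
Qed.
End S2.

Lemma idt1 (V : comRingType) (a1 a2 a3 a4 a5 : V) :
  a1 - (a2 + a3) = - (a4 + a5 - a1) + (a4 - a2) + (a5 - a3).
Proof. ring. Qed.

Lemma aux (V : zmodType) (a b c : V) : a + b - c = b -> c = a.
Proof. move=> h. have := congr1 (fun t => a + b - t) h. rewrite /= opprB addrC subrK addrK. by []. Qed.

Theorem mainTheorem2 (R : realType) (H : lmodType R[i]) (inner : H -> H -> R[i])
  (A : H -> H) (DP : H -> Prop) (P : H -> H) (B : H -> H) :
  is_hilbert_space inner ->
  bounded_op inner A -> symmetric_op inner A ->
  self_adjoint inner DP P ->
  (forall x, dom_comp_right DP A x <-> DP x) ->
  bounded_op inner B -> (forall f, DP f -> DP (B f)) ->
  (forall f, DP f -> P (A f) - A (P f) = B f) ->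
  closed_op inner (dom_comp_left DP) (fun x => A (P x)) /\
  self_adjoint inner (dom_comp_right DP A) (fun x => A (P (A x))).
Proof.
move=> [IP _] hA hAs [hdense hsa] hdom hB hBD hcomm.
have adjP : forall y x, DP y -> DP x -> inner (P x) y = inner x (P y).
  by move=> y x hy hx; apply: (proj2 (hsa y (P y)) (conj hy erefl)).
have domA : forall x, DP x -> DP (A x) by move=> x hx; exact: (proj2 (hdom x)).
have domA' : forall x, DP (A x) -> DP x by move=> x hx; exact: (proj1 (hdom x)).
have BP : forall f, DP f -> P (A f) = A (P f) + B f.
  by move=> f hf; rewrite -(hcomm f hf) addrC subrK.
have linA := lin_sub hA.1.
have linB := lin_sub hB.1.
have skewD : forall x w, DP x -> DP w -> inner (B x) w = - inner x (B w).
  move=> x w hx hw.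
  rewrite -(hcomm x hx) -(hcomm w hw) (innerBl IP) (innerBr IP).
  rewrite (adjP w (A x) hw (domA x hx)) (hAs x (P w)) (hAs (P x) w).
  by rewrite (adjP (A w) x (domA w hw) hx) opprB.
have third : forall e : R, 0 < e -> 0 < e / 3 by move=> e he; apply: divr_gt0.
have skew : forall x w, DP x -> inner (B x) w = - inner x (B w).
  move=> x w hx; apply/eqP; rewrite -subr_eq0 opprK; apply/eqP.
  apply: smallc_zero => e he.
  have [d1 hd1 H1] := inner_small IP (B x) (third e he).
  have [d2 hd2 H2] := inner_small IP x (third e he).
  have [d2' hd2' H2'] := bnd hB hd2.
  have [y [hy hwy]] := hdense w _ (min_pos hd1 hd2').
  have [hw1 hw2] := min_lt hwy.
  have -> : inner (B x) w + inner x (B w) =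
            inner (B x) (w - y) + inner x (B (w - y)).
    by rewrite linB !(innerBr IP) (skewD x y hx hy); ring.
  have := smallc_add (H1 _ hw1) (H2 _ (H2' _ hw2)).
  move=> [a b]; split.
    by apply: lt_le_trans a _; have := third e he; lra.
  by apply: lt_le_trans b _; have := third e he; lra.
split.
  move=> u x y hu hux hy; rewrite /dom_comp_left in hu *.
  have hadj : adjoint_graph inner DP P (A x) (y + B x).
    move=> v hv.
    apply/eqP; rewrite -subr_eq0; apply/eqP.
    apply: smallc_zero => e he.
    have [d1 hd1 H1] := inner_small IP (P v) (third e he).
    have [d1' hd1' H1'] := bnd hA hd1.
    have [N1 HN1] := hux _ hd1'.
    have [d2 hd2 H2] := inner_small IP v (third e he).
    have [N2 HN2] := hy _ hd2.
    have [d3 hd3 H3] := inner_small IP v (third e he).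
    have [d3' hd3' H3'] := bnd hB hd3.
    have [N3 HN3] := hux _ hd3'.
    set n := (N1 + N2 + N3)%N.
    have e0 : inner (P v) (A (u n)) = inner v (A (P (u n))) + inner v (B (u n)).
      by rewrite (adjP _ _ (domA _ (hu n)) hv) BP // (innerDr IP).
    have -> : inner (P v) (A x) - inner v (y + B x) =
      - inner (P v) (A (u n - x)) + inner v (A (P (u n)) - y)
      + inner v (B (u n - x)).
      rewrite linA linB !(innerBr IP) (innerDr IP) e0. move: (inner (P v) (A x)) (inner v y) (inner v (B x)) (inner v (A (P (u n)))) (inner v (B (u n))) => a1 a2 a3 a4 a5; exact: idt1.
    have k1 := H1 _ (H1' _ (HN1 n ltac:(rewrite /n; lia))).
    have k2 := H2 _ (HN2 n ltac:(rewrite /n; lia)).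
    have k3 := H3 _ (H3' _ (HN3 n ltac:(rewrite /n; lia))).
    have := smallc_add (smallc_add (smallc_opp k1) k2) k3.
    move=> [a b]; split.
      by apply: lt_le_trans a _; have := third e he; lra.
    by apply: lt_le_trans b _; have := third e he; lra.
  have [hAx eP] := proj1 (hsa _ _) hadj.
  split; first exact: domA'.
  by apply: (aux (b := B x)); rewrite eP; exact: hcomm (domA' _ hAx).
split.
  move=> x e he; have [y [hy hxy]] := hdense x e he.
  by exists y; split => //; rewrite /dom_comp_right; apply: domA.
move=> y z; split.
  move=> hyz.
  have hadj : adjoint_graph inner DP P (A (A y)) (z + B (A y)).
    move=> x hx.
    have eA : A (P x) = P (A x) - B x by rewrite -(hcomm x hx) opprB addrC subrK.
    have := hyz x (domA x hx); rewrite /= => e1.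
    rewrite -(hAs (P x) (A y)) eA (innerBl IP) -(hAs (P (A x)) y) e1.
    by rewrite (skew x (A y) hx) opprK (innerDr IP).
  have [hAAy eP] := proj1 (hsa _ _) hadj.
  have hAy : DP (A y) := domA' _ hAAy.
  split; first exact: hAy.
  by symmetry; apply: (aux (b := B (A y))); rewrite eP; exact: hcomm hAy.
move=> [hy ->] x hx.
by rewrite /= (hAs (P (A x)) y) (adjP _ _ hy hx) (hAs x (P (A y))).
Qed.
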